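(* Let $\mathfrak g$ be a finite-dimensional simple complex Lie algebra of classical type, $\mathfrak a\subseteq\mathfrak g$ a semisimple Levi subalgebra and $\lambda\in P^+$. Then the assignment $w_{\pi(\lambda)}\mapsto w_\lambda$ extends to a homomorphism of $\mathfrak a\otimes\mathbb C[t]$-modules $W^{\mathfrak a}(\pi(\lambda))\to W^{\mathfrak g}(\lambda)$.
   Context: $\mathfrak g$ is a finite-dimensional simple complex Lie algebra of classical type with triangular decomposition $\mathfrak g=\mathfrak n^+\oplus\mathfrak h\oplus\mathfrak n^-$, roots $R$, positive roots $R^+$, dominant integral weights $P^+$, $\mathfrak{sl}_2$-triples $x^\pm_\alpha,h_\alpha$. A Levi subalgebra is, for $R'\subseteq R$ closed under addition (within $R$) and under $\alpha\mapsto-\alpha$, $\mathfrak a=\sum_{\alpha\in R'}[\mathfrak g_\alpha,\mathfrak g_{-\alpha}]\oplus\bigoplus_{\alpha\in R'}\mathfrak g_\alpha$, semisimple with induced triangular decomposition $\mathfrak n^\pm_{\mathfrak a}\subseteq\mathfrak n^\pm$, $\mathfrak h_{\mathfrak a}\subseteq\mathfrak h$, positive roots $R'\cap R^+$; $\pi:\mathfrak h^*\to\mathfrak h^*_{\mathfrak a}$ is restriction, mapping $P^+$ to the dominant integral weights of $\mathfrak a$. Current algebra $\mathfrak g\otimes\mathbb C[t]$ with $[x\otimes p,y\otimes q]=[x,y]\otimes pq$. The global Weyl module $W^{\mathfrak g}(\lambda)$ is the $\mathfrak g\otimes\mathbb C[t]$-module generated by $w_\lambda$ subject to $(\mathfrak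 n^+\otimes\mathbb C[t]).w_\lambda=0$, $(h\otimes1).w_\lambda=\lambda(h)w_\lambda$ for $h\in\mathfrak h$, $(x^-_\alpha\otimes1)^{\lambda(h_\alpha)+1}.w_\lambda=0$ for $\alpha\in R^+$; $W^{\mathfrak a}(\mu)$ with generator $w_\mu$ is defined in the same way for $\mathfrak a$ and $\mu$ dominant integral for $\mathfrak a$. *)

(* Defs.v *)
From HB Require Import structures.
From mathcomp Require Import all_boot all_order all_algebra.
From mathcomp Require Import reals complex.
Set Implicit Arguments. Unset Strict Implicit. Unset Printing Implicit Defensive.
Import Order.TTheory GRing.Theory Num.Theory.
Local Open Scope ring_scope.

Section Lie.
Variable F : fieldType.
Variable N : nat.
Notation mat := 'M[F]_N.
Notation weight := (mat -> F).

Definition bracket (x y : mat) : mat := x *m y - y *m x.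

Definition sl_pred (x : mat) : Prop := \tr x = 0.
(* Lie algebra of the bilinear form with Gram matrix J *)
Definition form_pred (J : mat) (x : mat) : Prop := x^T *m J + J *m x = 0.
Definition J_orth : mat :=
  \matrix_(i < N, j < N) (if (i + j == N.-1)%N then 1 else 0).
(* symplectic form [[0, K], [-K, 0]], K the antidiagonal identity (N even) *)
Definition J_symp : mat :=
  \matrix_(i < N, j < N)
    (if (i + j == N.-1)%N then (if (i < N./2)%N then 1 else -1) else 0).

(* g is a simple Lie algebra of classical type A_n (n>=1), B_n (n>=2),
   C_n (n>=3) or D_n (n>=4), in its standard matrix realisation. *)
Definition classical (g : mat -> Prop) : Prop :=
  [\/ exists n, (1 <= n)%N /\ N = n.+1 /\ (forall x, g x <-> sl_pred x),
      exists n, (2 <= n)%N /\ N = (n + n).+1 /\ (forall x, g x <-> form_pred J_orth x),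
      exists n, (3 <= n)%N /\ N = (n + n)%N /\ (forall x, g x <-> form_pred J_symp x)
    | exists n, (4 <= n)%N /\ N = (n + n)%N /\ (forall x, g x <-> form_pred J_orth x)].

Variable g : mat -> Prop.

Definition cartan (x : mat) : Prop := g x /\ is_diag_mx x.
Definition nplus (x : mat) : Prop := g x /\ forall i j : 'I_N, (j <= i)%N -> x i j = 0.

(* elements of h^*: functions on gl_N, linear on h and vanishing off h *)
Definition is_weight (l : weight) : Prop :=
  (forall x, ~ cartan x -> l x = 0) /\
  (forall (a : F) x y, cartan x -> cartan y -> l (a *: x + y) = a * l x + l y).

Definition wopp (a : weight) : weight := fun h => - a h.
Definition wadd (a b : weight) : weight := fun h => a h + b h.

Definition rootspace (a : weight) (x : mat) : Prop :=
  g x /\ forall h, cartan h -> bracket h x = a h *: x.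

Definition is_root (a : weight) : Prop :=
  is_weight a /\ (exists h, cartan h /\ a h != 0) /\ (exists x, x != 0 /\ rootspace a x).

Definition pos_root (a : weight) : Prop :=
  is_root a /\ forall x, rootspace a x -> nplus x.

(* [xp, xm] is the coroot h_a of an sl_2-triple (xm, h_a, xp) for a *)
Definition sl2_pair (a : weight) (xp xm : mat) : Prop :=
  rootspace a xp /\ rootspace (wopp a) xm /\ a (bracket xp xm) = 2.

Definition dominant (l : weight) : Prop :=
  is_weight l /\
  forall a xp xm, pos_root a -> sl2_pair a xp xm ->
    exists n : nat, l (bracket xp xm) = n%:R.

Definition span (G : mat -> Prop) (x : mat) : Prop :=
  exists s : seq mat, (forall y, y \in s -> G y) /\ x = \sum_(y <- s) y.

Definition levi_roots (R' : weight -> Prop) : Prop :=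
  [/\ forall a, R' a -> is_root a,
      forall a, R' a -> R' (wopp a) &
      forall a b, R' a -> R' b -> is_root (wadd a b) -> R' (wadd a b)].

Definition coroot_gen (R' : weight -> Prop) (x : mat) : Prop :=
  exists a u v, [/\ R' a, rootspace a u, rootspace (wopp a) v & x = bracket u v].

Definition levi (R' : weight -> Prop) : mat -> Prop :=
  span (fun x => coroot_gen R' x \/ exists a, R' a /\ rootspace a x).
Definition levi_cartan (R' : weight -> Prop) : mat -> Prop := span (coroot_gen R').
Definition levi_nplus (R' : weight -> Prop) : mat -> Prop :=
  span (fun x => exists a, [/\ R' a, pos_root a & rootspace a x]).

End Lie.

Section Modules.
Variable F : fieldType.
Variable N : nat.
Notation mat := 'M[F]_N.

(* act x k v is the action of x (x) t^k on v *)
Definition is_cur_module (L : mat -> Prop) (V : lmodType F)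
    (act : mat -> nat -> V -> V) : Prop :=
  [/\ forall x k (a : F) (u v : V), L x -> act x k (a *: u + v) = a *: act x k u + act x k v,
      forall x y k (a : F) (v : V), L x -> L y ->
        act (a *: x + y) k v = a *: act x k v + act y k v &
      forall x y k l (v : V), L x -> L y ->
        act (bracket x y) (k + l)%N v = act x k (act y l v) - act y l (act x k v)].

Definition is_cur_hom (L : mat -> Prop) (V W : lmodType F)
    (actV : mat -> nat -> V -> V) (actW : mat -> nat -> W -> W) (f : V -> W) : Prop :=
  (forall (a : F) u v, f (a *: u + v) = a *: f u + f v) /\
  (forall x k v, L x -> f (actV x k v) = actW x k (f v)).

(* defining relations of a global Weyl module for the Lie algebra with
   positive nilradical np, Cartan hh and positive roots PR (root spaces and
   coroots taken inside the ambient g), highest weight l (restricted to hh) *)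
Definition weyl_rel (g np hh : mat -> Prop) (PR : (mat -> F) -> Prop)
    (l : mat -> F) (V : lmodType F) (act : mat -> nat -> V -> V) (w : V) : Prop :=
  [/\ forall x k, np x -> act x k w = 0,
      forall h, hh h -> act h 0%N w = l h *: w &
      forall a xp xm (n : nat), PR a -> sl2_pair g a xp xm ->
        l (bracket xp xm) = n%:R -> iter n.+1 (act xm 0%N) w = 0].

(* (V, act, w) is the global Weyl module: the L (x) C[t]-module generated by w
   subject to the relations, i.e. the initial such pointed module *)
Definition is_global_weyl (g L np hh : mat -> Prop) (PR : (mat -> F) -> Prop)
    (l : mat -> F) (V : lmodType F) (act : mat -> nat -> V -> V) (w : V) : Prop :=
  [/\ is_cur_module L act,
      weyl_rel g np hh PR l act w &
      forall (M : lmodType F) (actM : mat -> nat -> M -> M) (m : M),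
        is_cur_module L actM -> weyl_rel g np hh PR l actM m ->
        exists f : V -> M, [/\ is_cur_hom L act actM f, f w = m &
          forall f' : V -> M, is_cur_hom L act actM f' -> f' w = m ->
            forall v, f' v = f v]].

End Modules.

Definition weyl_g (F : fieldType) (N : nat) (g : 'M[F]_N -> Prop) (l : 'M[F]_N -> F)
    (V : lmodType F) act (w : V) : Prop :=
  is_global_weyl g g (nplus g) (cartan g) (pos_root g) l act w.

(* W^a(pi(l)) for the Levi subalgebra a attached to R'; pi(l) is l restricted
   to h_a = levi_cartan g R' *)
Definition weyl_levi (F : fieldType) (N : nat) (g : 'M[F]_N -> Prop)
    (R' : ('M[F]_N -> F) -> Prop) (l : 'M[F]_N -> F)
    (V : lmodType F) act (w : V) : Prop :=
  is_global_weyl g (levi g R') (levi_nplus g R') (levi_cartan g R')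
    (fun a => R' a /\ pos_root g a) l act w.

(* Main.v *)
Require Import Defs.
From HB Require Import structures.
From mathcomp Require Import all_boot all_order all_algebra.
From mathcomp Require Import reals complex.
From mathcomp Require Import zify.
Set Implicit Arguments. Unset Strict Implicit. Unset Printing Implicit Defensive.
Import Order.TTheory GRing.Theory Num.Theory.
Local Open Scope ring_scope.

Lemma zid (V : zmodType) (a b c d e f : V) : a - b - (c - d) = (a - e) - (f - d) + ((e - c) - (b - f)).
Proof. rewrite !opprB [RHS]addrACA !addrA !subrK -!addrA; congr (_ + _).
by rewrite addrCA [RHS]addrCA (addrC (-b)). Qed.

Lemma jacobi (F : fieldType) N (h u v : 'M[F]_N) :
  bracket h (bracket u v) = bracket (bracket h u) v + bracket u (bracket h v).
Proof. rewrite /bracket !mulmxBl !mulmxBr !mulmxA. exact: zid. Qed.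

Lemma sl_br (F : fieldType) N (x y : 'M[F]_N) : sl_pred (bracket x y).
Proof. by rewrite /sl_pred /bracket raddfB /= mxtrace_mulC subrr. Qed.

Lemma sl_add (F : fieldType) N (x y : 'M[F]_N) : sl_pred x -> sl_pred y -> sl_pred (x + y).
Proof. by rewrite /sl_pred raddfD /= => -> ->; rewrite addr0. Qed.

Lemma sl_0 (F : fieldType) N : sl_pred (0 : 'M[F]_N).
Proof. by rewrite /sl_pred raddf0. Qed.

Lemma form_0 (F : fieldType) N (J : 'M[F]_N) : form_pred J 0.
Proof. by rewrite /form_pred trmx0 mul0mx mulmx0 addr0. Qed.

Lemma form_add (F : fieldType) N (J x y : 'M[F]_N) :
  form_pred J x -> form_pred J y -> form_pred J (x + y).
Proof.
rewrite /form_pred => /eqP; rewrite addr_eq0 => /eqP hx /eqP; rewrite addr_eq0 => /eqP hy.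
by rewrite raddfD /= mulmxDl mulmxDr hx hy -opprD addNr.
Qed.

Lemma form_br (F : fieldType) N (J x y : 'M[F]_N) :
  form_pred J x -> form_pred J y -> form_pred J (bracket x y).
Proof.
rewrite /form_pred => /eqP; rewrite addr_eq0 => /eqP hx /eqP; rewrite addr_eq0 => /eqP hy.
rewrite /bracket raddfB /= !trmx_mul mulmxBl mulmxBr -!mulmxA hx hy !mulmxN !mulmxA hx hy.
rewrite !mulNmx !opprK -[X in _ + X]opprB. by rewrite subrr.
Qed.

Lemma sum_ind (F : fieldType) N (i : 'I_N) :
  \sum_(c < N) (((c : nat) == i)%:R : F) = 1.
Proof.
rewrite (bigD1 i) //= eqxx big1 ?addr0 // => c /eqP Hc.
case: eqP => // Hv; exfalso; apply: Hc; exact: val_inj.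
Qed.

Lemma comm_diag (F : fieldType) N (z : 'M[F]_N) v :
  bracket (diag_mx v) z = 0 -> forall i j, z i j * (v 0 i - v 0 j) = 0.
Proof.
move=> /matrixP H i j; move: (H i j); rewrite /bracket mul_diag_mx mul_mx_diag !mxE.
by rewrite mulrBr mulrC.
Qed.

Lemma form_diag (F : fieldType) N (J : 'M[F]_N) (k : nat) : (k < N)%N ->
  (forall a b : 'I_N, (a + b != N.-1)%N -> J a b = 0) ->
  form_pred J (diag_mx (\row_(c < N) ((((c : nat) == k)%:R : F) - ((c : nat) == N.-1 - k)%N%:R))).
Proof.
move=> hk HJ; rewrite /form_pred tr_diag_mx mul_diag_mx mul_mx_diag.
apply/matrixP => a b; rewrite !mxE.
have [Hab|Hab] := boolP (a + b == N.-1)%N; last by rewrite HJ // mulr0 mul0r addr0.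
move/eqP: Hab => Hab.
have E1 : ((a : nat) == k) = ((b : nat) == N.-1 - k)%N.
  by apply/idP/idP => /eqP E; apply/eqP; have := ltn_ord a; have := ltn_ord b; lia.
have E2 : ((a : nat) == N.-1 - k)%N = ((b : nat) == k).
  by apply/idP/idP => /eqP E; apply/eqP; have := ltn_ord a; have := ltn_ord b; lia.
rewrite E1 E2 (mulrC _ (J a b)) -mulrDr.
by rewrite -[X in _ + X]opprB subrr mulr0.
Qed.

Lemma g_closed (F : fieldType) N (g : 'M[F]_N -> Prop) : classical g ->
  [/\ g 0, forall x y, g x -> g y -> g (x + y) & forall x y, g x -> g y -> g (bracket x y)].
Proof.
case=> [[n [_ [_ H]]]|[n [_ [_ H]]]|[n [_ [_ H]]]|[n [_ [_ H]]]];
  (split; [apply/H| move=> x y /H hx /H hy; apply/H | move=> x y /H hx /H hy; apply/H]);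
  by [exact: sl_0 | exact: sl_add | exact: sl_br | exact: form_0 | exact: form_add | exact: form_br].
Qed.

Lemma one_neq_m1 (F : fieldType) : (2 : F) != 0 -> (1 : F) != -1.
Proof. move=> h2; apply/eqP => E; move/eqP: h2; apply; by rewrite -[2]/(1 *+ 2) mulr2n {2}E addrN. Qed.

Lemma form_choice (F : fieldType) N (J : 'M[F]_N) (g : 'M[F]_N -> Prop) :
  (2 : F) != 0 -> (forall x, g x <-> form_pred J x) ->
  (forall a b : 'I_N, (a + b != N.-1)%N -> J a b = 0) ->
  forall i j : 'I_N, i != j -> exists v : 'rV[F]_N, g (diag_mx v) /\ v 0 i != v 0 j.
Proof.
move=> h2 H HJ i j hij.
have hij' : (i : nat) != j by [].
have [Hi|Hi] := boolP (i + i != N.-1)%N.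
  exists (\row_(c < N) ((((c : nat) == i)%:R : F) - ((c : nat) == N.-1 - i)%N%:R)).
  split; first by apply/H; apply: form_diag.
  rewrite !mxE eqxx /=.
  have -> : ((i : nat) == N.-1 - i)%N = false by apply/eqP; lia.
  rewrite [(j : nat) == i]eq_sym (negbTE hij') sub0r subr0.
  case: ((j : nat) == _); rewrite ?oppr0; [exact: (one_neq_m1 h2) | exact: oner_neq0].
move/negbNE: Hi => /eqP Hi.
exists (\row_(c < N) ((((c : nat) == j)%:R : F) - ((c : nat) == N.-1 - j)%N%:R)).
split; first by apply/H; apply: form_diag.
rewrite !mxE eqxx (negbTE hij') /=.
have -> : ((j : nat) == N.-1 - j)%N = false by apply/eqP; move: Hi; lia.
have -> : ((i : nat) == N.-1 - j)%N = false by apply/eqP; move/eqP: hij'; have := ltn_ord j; lia.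
by rewrite ?subr0 ?sub0r eq_sym oner_eq0.
Qed.

Lemma g_diag (F : fieldType) N (g : 'M[F]_N -> Prop) : (2 : F) != 0 -> classical g ->
  forall i j : 'I_N, i != j -> exists v : 'rV[F]_N, g (diag_mx v) /\ v 0 i != v 0 j.
Proof.
move=> h2; case=> [[n [_ [_ H]]]|[n [_ [_ H]]]|[n [_ [_ H]]]|[n [_ [_ H]]]] i j hij.
- have hij' : (i : nat) != j by [].
  exists (\row_(c < N) ((((c : nat) == i)%:R : F) - ((c : nat) == j)%:R)).
  split.
    apply/H; rewrite /sl_pred mxtrace_diag; under eq_bigr do rewrite mxE.
    by rewrite sumrB !sum_ind subrr.
  rewrite !mxE !eqxx (negbTE hij') [(j : nat) == i]eq_sym (negbTE hij') subr0 sub0r.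
  exact: one_neq_m1.
- apply: (form_choice h2 H) => // a b hab; by rewrite mxE (negbTE hab).
- apply: (form_choice h2 H) => // a b hab; by rewrite mxE (negbTE hab).
- apply: (form_choice h2 H) => // a b hab; by rewrite mxE (negbTE hab).
Qed.

Lemma span_closed (F : fieldType) N (P G : 'M[F]_N -> Prop) :
  P 0 -> (forall x y, P x -> P y -> P (x + y)) -> (forall x, G x -> P x) ->
  forall x, Defs.span G x -> P x.
Proof.
move=> P0 PD GP x [s [Hs ->]]; elim: s Hs => [|y s IH] Hs; first by rewrite big_nil.
rewrite big_cons; apply: PD; first by apply: GP; apply: Hs; exact: mem_head.
by apply: IH => z hz; apply: Hs; rewrite in_cons hz orbT.
Qed.

Lemma bracket_scalel (F : fieldType) N (c : F) (x y : 'M[F]_N) :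
  bracket (c *: x) y = c *: bracket x y.
Proof. by rewrite /bracket scalerBr -scalemxAl -scalemxAr. Qed.

Lemma bracket_scaler (F : fieldType) N (c : F) (x y : 'M[F]_N) :
  bracket x (c *: y) = c *: bracket x y.
Proof. by rewrite /bracket scalerBr -scalemxAl -scalemxAr. Qed.

Unset Implicit Arguments.
Theorem mainTheorem8 (R : realType) (N : nat) (g : 'M[R[i]]_N -> Prop)
  (Hg : classical g)
  (R' : ('M[R[i]]_N -> R[i]) -> Prop) (HR' : levi_roots g R')
  (l : 'M[R[i]]_N -> R[i]) (Hl : dominant g l)
  (Va : lmodType R[i]) (acta : 'M[R[i]]_N -> nat -> Va -> Va) (wa : Va)
  (Ha : weyl_levi g R' l acta wa)
  (Vg : lmodType R[i]) (actg : 'M[R[i]]_N -> nat -> Vg -> Vg) (wg : Vg)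
  (Hgw : weyl_g g l actg wg) :
  exists f : Va -> Vg, is_cur_hom (levi g R') acta actg f /\ f wa = wg.
Proof.
have h2 : (2 : R[i]) != 0 by rewrite pnatr_eq0.
have [g0 gD gB] := g_closed Hg.
have levi_g : forall x, levi g R' x -> g x.
  apply: span_closed => // x [[a [u [v [_ [gu _] [gv _] ->]]]] | [a [_ [gx _]]]] //.
  exact: gB.
have np : forall x, levi_nplus g R' x -> nplus g x.
  apply: span_closed.
  - by split => // i j _; rewrite mxE.
  - move=> x y [gx hx] [gy hy]; split; first exact: gD.
    by move=> i j hij; rewrite mxE hx ?hy ?addr0.
  - by move=> x [a [_ Hp hr]]; exact: Hp.2 _ hr.
have ch : forall x, levi_cartan g R' x -> cartan g x.
  apply: span_closed.
  - by split => //; apply/is_diag_mxP => i j _; rewrite mxE.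
  - move=> x y [gx /is_diag_mxP hx] [gy /is_diag_mxP hy]; split; first exact: gD.
    by apply/is_diag_mxP => i j hij; rewrite mxE hx ?hy ?addr0.
  - move=> x [a [u [v [_ [gu hu] [gv hv] ->]]]]; split; first exact: gB.
    apply/is_diag_mxP => i j hij.
    have [vv [gd hne]] := g_diag h2 Hg hij.
    have hc : cartan g (diag_mx vv) by split => //; exact: diag_mx_is_diag.
    have E : bracket (diag_mx vv) (bracket u v) = 0.
      rewrite jacobi (hu _ hc) (hv _ hc) bracket_scalel bracket_scaler /wopp.
      by rewrite scaleNr addrN.
    have := comm_diag E i j; move/eqP; rewrite mulf_eq0 subr_eq0 (negbTE hne) orbF.
    by move/eqP.
case: Hgw => [[m1 m2 m3] [w1 w2 w3] _].
have Hmod : is_cur_module (levi g R') actg.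
  split=> *; [apply: m1 | apply: m2 | apply: m3]; by auto.
have Hrel : weyl_rel g (levi_nplus g R') (levi_cartan g R')
    (fun a => R' a /\ pos_root g a) l actg wg.
  split.
  - by move=> x k /np; exact: w1.
  - by move=> h /ch; exact: w2.
  - by move=> a xp xm n [_ Hp]; exact: w3.
case: Ha => _ _ U.
have [f [hf hfw _]] := U Vg actg wg Hmod Hrel.
by exists f.
Qed.
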